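(* Let $n\geqslant1$, $N\in\mathbb{N}$, $\gamma\in\mathbb{R}\setminus\{0\}$, let $a_0,\ldots,a_n$ be functions holomorphic near $t=0$ with $a_n\equiv1$, and let $M(x,t,u_0,\ldots,u_n)$ be meromorphic in $t$ and holomorphic in the remaining variables near $0\in\mathbb{C}^{n+3}$. Assume that for every integer $k\geqslant1$ the polynomial $$P_k(\lambda)=\sum_{j=0}^n a_j(0)\,(k+N+{\rm i}\gamma\lambda)^j$$ has no integer roots. Suppose the equation $$\sum_{j=0}^n a_j(x^{{\rm i}\gamma})(\delta+N)^j u=x\,M(x,x^{{\rm i}\gamma},u,\delta u,\ldots,\delta^n u),\qquad\delta=x\frac{d}{dx},$$ has a formal solution $\psi=\sum_{k=1}^\infty c_k(x^{{\rm i}\gamma})x^k$ with each $c_k$ meromorphic at $t=0$. Then $\psi$ is the unique exotic formal series of the form $\sum_{k=1}^\infty c_k(x^{{\rm i}\gamma})x^k$ (with $c_k$ meromorphic at $t=0$) satisfying this equation.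
   Context: $x^{{\rm i}\gamma}=e^{{\rm i}\gamma\ln x}$. On exotic series $\delta$ acts termwise by $\delta\bigl(p(x^{{\rm i}\gamma})x^k\bigr)=\bigl((k+{\rm i}\gamma\,t\tfrac{d}{dt})p\bigr)(x^{{\rm i}\gamma})x^k$, and substitution into $M$ is formal, collecting terms by powers of $x$. *)

(* Defs.v *)
From HB Require Import structures.
From mathcomp Require Import all_boot all_order all_algebra.
From mathcomp Require Import complex Rstruct.
Set Implicit Arguments. Unset Strict Implicit. Unset Printing Implicit Defensive.
Import Order.TTheory GRing.Theory Num.Theory.
Local Open Scope ring_scope.

Definition CC := (Rdefinitions.R)[i].

(* A germ at t = 0 given by a power series sum_n a n t^n is holomorphic
   iff the series has a positive radius of convergence, i.e. iff
   |a n| r^n is bounded for some r > 0. *)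
Definition conv_series (a : nat -> CC) : Prop :=
  exists r : CC, exists B : CC, 0 < r /\ forall n, `|a n| * r ^+ n <= B.

(* Formal Laurent series with finite principal part:
   Laurent v a  stands for  t^(-v) * sum_(n >= 0) a n t^n. *)
Record laurent := Laurent { lval : nat; lcf : nat -> CC }.

Definition lcoef (f : laurent) (m : int) : CC :=
  if (0 <= m + (lval f)%:Z)%R then lcf f (absz (m + (lval f)%:Z)) else 0.

Definition leqL (f g : laurent) : Prop := forall m : int, lcoef f m = lcoef g m.

Definition mero (f : laurent) : Prop := conv_series (lcf f).

Definition lzero : laurent := Laurent 0 (fun _ => 0).
Definition lone : laurent := Laurent 0 (fun n => (n == 0%N)%:R).

(* the same series, represented with pole order  lval f + k *)
Definition lraise (k : nat) (f : laurent) : laurent :=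
  Laurent (lval f + k) (fun n => if (n < k)%N then 0 else lcf f (n - k)).

Definition ladd (f g : laurent) : laurent :=
  let w := maxn (lval f) (lval g) in
  let f' := lraise (w - lval f) f in
  let g' := lraise (w - lval g) g in
  Laurent w (fun n => lcf f' n + lcf g' n).

Definition lmul (f g : laurent) : laurent :=
  Laurent (lval f + lval g)
          (fun n => \sum_(i < n.+1) lcf f i * lcf g (n - i)).

Definition lhol (a : nat -> CC) : laurent := Laurent 0 a.

(* the operator (z + i gamma t d/dt)^j on Laurent series:
   it multiplies the coefficient of t^(n - v) by (z + i gamma (n - v))^j *)
Definition lop (gamma : Rdefinitions.R) (z : CC) (j : nat) (f : laurent) : laurent :=
  Laurent (lval f)
    (fun n => (z + 'i * gamma%:C * ((n%:Z - (lval f)%:Z)%:~R))%C ^+ j * lcf f n).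

(* Formal series in x with Laurent coefficients: F k = coefficient of x^k. *)
Definition xser := nat -> laurent.

Definition xmul (F G : xser) : xser :=
  fun k => \big[ladd/lzero]_(i < k.+1) lmul (F i) (G (k - i)%N).

Definition xone : xser := fun k => if k == 0%N then lone else lzero.

Definition xpow (F : xser) (e : nat) : xser := iter e (xmul F) xone.

Section Equation.
Variables (n N : nat) (gamma : Rdefinitions.R).
(* a j = Taylor coefficients of a_j at t = 0 *)
Variable a : 'I_n.+1 -> nat -> CC.
(* M(x,t,u_0..u_n) = t^(-mM) * sum_(p,s,q) Mc p s q x^p t^s u^q *)
Variable mM : nat.
Variable Mc : nat -> nat -> {ffun 'I_n.+1 -> nat} -> CC.

(* exotic series psi = sum_(k >= 1) c_k(x^{i gamma}) x^k, encoded by the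
   sequence c (c 0 is ignored). delta^j psi has x^l-coefficient
   (l + i gamma t d/dt)^j c_l. *)
Definition delta_pow (c : nat -> laurent) (j : nat) : xser :=
  fun l => if l == 0%N then lzero else lop gamma l%:R j (c l).

(* coefficient of x^k in sum_j a_j(x^{i gamma}) (delta + N)^j psi *)
Definition lhs_coef (c : nat -> laurent) (k : nat) : laurent :=
  \big[ladd/lzero]_(j < n.+1) lmul (lhol (a j)) (lop gamma (k + N)%:R j (c k)).

(* coefficient of x^e in M(x, x^{i gamma}, psi, delta psi, .., delta^n psi)
   (formal substitution; monomials with q_j > e contribute nothing) *)
Definition M_subst_coef (c : nat -> laurent) (e : nat) : laurent :=
  \big[ladd/lzero]_(p < e.+1)
   \big[ladd/lzero]_(q : {ffun 'I_n.+1 -> 'I_e.+1})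
     lmul (Laurent mM (fun s => Mc p s [ffun j => nat_of_ord (q j)]))
          ((\big[xmul/xone]_(j < n.+1) xpow (delta_pow c j) (q j)) (e - p)%N).

(* coefficient of x^k (k >= 1) in x * M(...) *)
Definition rhs_coef (c : nat -> laurent) (k : nat) : laurent :=
  M_subst_coef c k.-1.

Definition exotic_solution (c : nat -> laurent) : Prop :=
  (forall k, (0 < k)%N -> mero (c k)) /\
  (forall k, (0 < k)%N -> leqL (lhs_coef c k) (rhs_coef c k)).

Definition Pk (k : nat) : {poly CC} :=
  \sum_(j < n.+1) (a j 0%N)%:P * (((k + N)%:R : CC)%:P + ('i * gamma%:C)%C *: 'X) ^+ j.

End Equation.

(* Main.v *)
Require Import Defs.
From HB Require Import structures.
From mathcomp Require Import all_boot all_order all_algebra.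
From mathcomp Require Import complex Rstruct zify.
From Stdlib Require Import FunctionalExtensionality.
Import Order.TTheory GRing.Theory Num.Theory.
Local Open Scope ring_scope.

Lemma leqL_refl f : leqL f f. Proof. by []. Qed.
Lemma leqL_sym f g : leqL f g -> leqL g f. Proof. by move=> E m; rewrite E. Qed.
Lemma leqL_trans f g h : leqL f g -> leqL g h -> leqL f h.
Proof. by move=> E1 E2 m; rewrite E1 E2. Qed.

Arguments leqL_sym {f g}.
Arguments leqL_trans {f g h}.

Lemma lcoef_lraise k f m : lcoef (lraise k f) m = lcoef f m.
Proof.
rewrite /lcoef /= PoszD addrA.
case: (m + (lval f)%:Z) => [p|p].
  by rewrite -PoszD /= ltnNge leq_addl /= addnK.
case: ifP => // H.
have -> : (absz (Negz p + (k%:Z))%R < k)%N by lia.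
done.
Qed.

Lemma leqL_raise k f : leqL (lraise k f) f.
Proof. by move=> m; rewrite lcoef_lraise. Qed.

Lemma lcoef_at h n W : lval h = W -> lcoef h (n%:Z - W%:Z) = lcf h n.
Proof. by move=> <-; rewrite /lcoef subrK. Qed.

Lemma leqL_eq h h' : leqL h h' -> lval h = lval h' -> h = h'.
Proof.
case: h => v b; case: h' => v' b' /= E ev; subst v'.
congr Laurent; apply: functional_extensionality => n.
have := E (n%:Z - v%:Z).
by rewrite (@lcoef_at (Laurent v b) n v) // (@lcoef_at (Laurent v b') n v).
Qed.

Lemma leqL_pt h h' : lval h = lval h' -> lcf h =1 lcf h' -> leqL h h'.
Proof. by move=> ev ec m; rewrite /lcoef ev ec. Qed.

Lemma leqL_common f f' : leqL f f' ->
  lraise (maxn (lval f) (lval f') - lval f) f =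
  lraise (maxn (lval f) (lval f') - lval f') f'.
Proof.
move=> E; apply: leqL_eq.
  by move=> m; rewrite !lcoef_lraise.
by rewrite /= !subnKC ?leq_maxl ?leq_maxr.
Qed.

Lemma lmul_raisel k f g : lmul (lraise k f) g = lraise k (lmul f g).
Proof.
rewrite /lmul /lraise /=; congr Laurent; first by rewrite addnAC.
apply: functional_extensionality => n.
case: ltnP => Hn.
  apply: big1 => i _; rewrite ifT ?mul0r //.
  exact: leq_ltn_trans (ltn_ord i : (i <= n)%N) Hn.
rewrite -(subnKC Hn); set m := (n - k)%N.
rewrite -addnS big_split_ord /= big1 ?add0r; last first.
  by move=> i _; rewrite /= ltn_ord mul0r.
rewrite addKn; apply: eq_bigr => i _ /=.
rewrite ltnNge leq_addr /= addKn; congr (_ * lcf g _).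
by rewrite subnDl.
Qed.

Lemma lmulC f g : lmul f g = lmul g f.
Proof.
rewrite /lmul; congr Laurent; first by rewrite addnC.
apply: functional_extensionality => n.
rewrite (reindex_inj rev_ord_inj) /=.
apply: eq_bigr => i _; rewrite mulrC subSS; congr (_ * lcf f _).
rewrite subKn //; exact: (ltn_ord i).
Qed.

Lemma lmul_compatl {f f'} g : leqL f f' -> leqL (lmul f g) (lmul f' g).
Proof.
move=> E m.
rewrite -(lcoef_lraise (maxn (lval f) (lval f') - lval f) (lmul f g)).
rewrite -(lcoef_lraise (maxn (lval f) (lval f') - lval f') (lmul f' g)).
by rewrite -!lmul_raisel (leqL_common _ _ E).
Qed.

Lemma lmul_compat f f' g g' : leqL f f' -> leqL g g' -> leqL (lmul f g) (lmul f' g').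
Proof.
move=> E1 E2; apply: leqL_trans (lmul_compatl g E1) _.
rewrite (lmulC f') (lmulC f'); exact: lmul_compatl.
Qed.

Lemma lcoef_lzero m : lcoef lzero m = 0.
Proof. by rewrite /lcoef; case: ifP. Qed.

Lemma lcoef_ladd f g m : lcoef (ladd f g) m = lcoef f m + lcoef g m.
Proof.
rewrite -(lcoef_lraise (maxn (lval f) (lval g) - lval f) f).
rewrite -(lcoef_lraise (maxn (lval f) (lval g) - lval g) g).
rewrite /ladd; set f' := lraise _ f; set g' := lraise _ g.
have ef : lval f' = maxn (lval f) (lval g) by rewrite /= subnKC ?leq_maxl.
have eg : lval g' = maxn (lval f) (lval g) by rewrite /= subnKC ?leq_maxr.
rewrite /lcoef ef eg /=.
by case: ifP => _; rewrite ?addr0.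
Qed.

Lemma ladd_compat f f' g g' : leqL f f' -> leqL g g' -> leqL (ladd f g) (ladd f' g').
Proof. by move=> E1 E2 m; rewrite !lcoef_ladd E1 E2. Qed.

Lemma lcoef_lop gamma z j f m :
  lcoef (lop gamma z j f) m = (z + 'i * gamma%:C * m%:~R)%C ^+ j * lcoef f m.
Proof.
rewrite /lcoef /=; case: ifP => H; last by rewrite mulr0.
by rewrite gez0_abs // addrK.
Qed.

Lemma lop_compat gamma z j f f' : leqL f f' -> leqL (lop gamma z j f) (lop gamma z j f').
Proof. by move=> E m; rewrite !lcoef_lop E. Qed.

Definition agree (m : nat) (F G : xser) := forall i, (i <= m)%N -> leqL (F i) (G i).

Lemma xmul_agree m F F' G G' : agree m F G -> agree m F' G' ->
  agree m (xmul F F') (xmul G G').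
Proof.
move=> HF HF' i Hi; rewrite /xmul.
apply: (big_ind2 leqL) => //.
  by move=> ? ? ? ?; apply: ladd_compat.
move=> j _; apply: lmul_compat.
  apply: HF; apply: leq_trans Hi; rewrite -ltnS; exact: ltn_ord.
apply: HF'; apply: leq_trans Hi; exact: leq_subr.
Qed.

Lemma xpow_agree m F G e : agree m F G -> agree m (xpow F e) (xpow G e).
Proof.
move=> H; elim: e => [|e IH] /=; first by move=> i _.
exact: xmul_agree.
Qed.

Lemma M_compat n gamma mM Mc c c' e :
  (forall j, agree e (delta_pow gamma c j) (delta_pow gamma c' j)) ->
  leqL (@M_subst_coef n gamma mM Mc c e) (M_subst_coef gamma mM Mc c' e).
Proof.
move=> H; rewrite /M_subst_coef.
apply: (big_ind2 leqL) => //; first by move=> ? ? ? ?; apply: ladd_compat.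
move=> p _.
apply: (big_ind2 leqL) => //; first by move=> ? ? ? ?; apply: ladd_compat.
move=> q _; apply: lmul_compat => //.
have : agree e (\big[xmul/xone]_(j < n.+1) xpow (delta_pow gamma c j) (q j))
               (\big[xmul/xone]_(j < n.+1) xpow (delta_pow gamma c' j) (q j)).
  apply: (big_ind2 (agree e)); first by move=> i _.
    by move=> ? ? ? ?; apply: xmul_agree.
  by move=> j _; apply: xpow_agree.
by apply; exact: leq_subr.
Qed.

Lemma key (n N : nat) (gamma : Rdefinitions.R) (a : 'I_n.+1 -> nat -> CC) k
  (HPk : forall m : int, ~~ root (Pk N gamma a k) m%:~R) (f f' : laurent) :
  leqL (\big[ladd/lzero]_(j < n.+1) lmul (lhol (a j)) (lop gamma (k + N)%:R j f'))
       (\big[ladd/lzero]_(j < n.+1) lmul (lhol (a j)) (lop gamma (k + N)%:R j f)) ->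
  leqL f' f.
Proof.
set L := fun h => \big[ladd/lzero]_(j < n.+1) lmul (lhol (a j)) (lop gamma (k + N)%:R j h).
have Lc : forall h h', leqL h h' -> leqL (L h) (L h').
  move=> h h' E; apply: (big_ind2 leqL) => //; first by move=> ? ? ? ?; apply: ladd_compat.
  by move=> j _; apply: lmul_compat => //; apply: lop_compat.
move=> E0.
set w := maxn (lval f) (lval f').
set g := lraise (w - lval f) f; set g' := lraise (w - lval f') f'.
have eg : lval g = w by rewrite /= subnKC ?leq_maxl.
have eg' : lval g' = w by rewrite /= subnKC ?leq_maxr.
have E : leqL (L g') (L g).
  apply: leqL_trans (Lc _ _ (leqL_raise _ _)) _.
  apply: leqL_trans E0 _.
  apply: Lc; apply: leqL_sym; exact: leqL_raise.
have form : forall h nn, lval h = w -> lcoef (L h) (nn%:Z - w%:Z) =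
   \sum_(j < n.+1) \sum_(i < nn.+1) a j i *
      (((k + N)%:R + 'i * gamma%:C * (((nn - i)%N)%:Z - w%:Z)%:~R)%C ^+ j)
      * lcf h (nn - i)%N.
  move=> h nn eh.
  rewrite /L (big_morph (fun x => lcoef x (nn%:Z - w%:Z)) (fun x y => lcoef_ladd x y _) (lcoef_lzero _)).
  apply: eq_bigr => j _.
  rewrite lcoef_at /=; last by rewrite eh.
  by apply: eq_bigr => i _; rewrite eh mulrA.
have D0 : forall nn, lcf g' nn - lcf g nn = 0.
  elim/ltn_ind => nn IH.
  have := E (nn%:Z - w%:Z); rewrite !form // => /eqP; rewrite -subr_eq0 => /eqP.
  rewrite -sumrB.
  rewrite (eq_bigr (fun j : 'I_n.+1 => (a j 0%N * ((k + N)%:R + 'i * gamma%:C * (nn%:Z - w%:Z)%:~R)%C ^+ j) * (lcf g' nn - lcf g nn))); last first.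
    move=> j _; rewrite -sumrB big_ord_recl big1 ?addr0 ?subn0; last first.
      move=> i _; rewrite -mulrBr.
      rewrite IH ?mulr0 //.
      rewrite lift0; have := ltn_ord i; lia.
    by rewrite -mulrBr.
  rewrite -mulr_suml => /eqP; rewrite mulf_eq0 => /orP [|/eqP //].
  move=> H; exfalso; move: (HPk (nn%:Z - w%:Z)); rewrite /root.
  suff -> : (Pk N gamma a k).[(nn%:Z - w%:Z)%:~R] =
     \sum_(i < n.+1) a i 0%N * ((k + N)%:R + 'i * gamma%:C * (nn%:Z - w%:Z)%:~R)%C ^+ i.
    by rewrite H.
  rewrite /Pk horner_sum; apply: eq_bigr => j _.
  by rewrite hornerM hornerC horner_exp hornerD hornerC hornerZ hornerX.
have gg : leqL g' g.
  apply: leqL_pt; first by rewrite eg eg'.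
  by move=> nn; apply/eqP; rewrite -subr_eq0 D0.
apply: (leqL_trans (leqL_sym (leqL_raise (w - lval f') f'))).
apply: (leqL_trans gg); exact: leqL_raise.
Qed.

Theorem lemma2 (n N : nat) (gamma : Rdefinitions.R)
  (a : 'I_n.+1 -> nat -> CC) (mM : nat)
  (Mc : nat -> nat -> {ffun 'I_n.+1 -> nat} -> CC)
  (c c' : nat -> laurent) :
  (1 <= n)%N ->
  gamma != 0 ->
  (* each a_j is holomorphic near t = 0, and a_n = 1 *)
  (forall j, conv_series (a j)) ->
  (forall s, a ord_max s = (s == 0%N)%:R) ->
  (* M = t^(-mM) * (holomorphic function of (x,t,u_0..u_n) near 0) *)
  (exists r : CC, exists B : CC, 0 < r /\
     forall p s (q : {ffun 'I_n.+1 -> nat}),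
       `|Mc p s q| * r ^+ (p + s + \sum_(j < n.+1) q j) <= B) ->
  (* for every k >= 1, P_k has no integer roots *)
  (forall k, (1 <= k)%N -> forall m : int, ~~ root (Pk N gamma a k) m%:~R) ->
  (* psi (encoded by c) is an exotic formal solution *)
  exotic_solution N gamma a mM Mc c ->
  (* uniqueness: any exotic formal solution psi' (encoded by c') equals psi *)
  exotic_solution N gamma a mM Mc c' ->
  forall k, (1 <= k)%N -> leqL (c' k) (c k).
Proof.
move=> _ _ _ _ _ HP [_ Hc] [_ Hc'] k.
elim/ltn_ind: k => k IH k1.
have Er : leqL (rhs_coef gamma mM Mc c' k) (rhs_coef gamma mM Mc c k).
  rewrite /rhs_coef; apply: M_compat => j i Hi.
  rewrite /delta_pow; case: eqP => // /eqP i0.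
  apply: lop_compat; apply: IH; last by rewrite lt0n.
  by move: Hi; case: (k) k1 => // k' _; rewrite ltnS.
have El := leqL_trans (Hc' k k1) (leqL_trans Er (leqL_sym (Hc k k1))).
move: El; rewrite /lhs_coef; apply: (@key n N gamma a k (HP k k1) (c k) (c' k)).
Qed.
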